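(* Let $K$ be a field of any characteristic. Let $d_1,\ldots,d_n$ be positive integers and let $a_{i,j}$ ($1\le i\le r$, $1\le j\le n$) be positive integers, where $r\ge 3$. Let $A$ be the set of columns of the $n\times(n+r)$ matrix $$\begin{pmatrix} d_1 & 0 & \cdots & 0 & a_{1,1} & \cdots & a_{r,1}\\ 0 & d_2 & \cdots & 0 & a_{1,2} & \cdots & a_{r,2}\\ \vdots & & \ddots & & \vdots & & \vdots\\ 0 & 0 & \cdots & d_n & a_{1,n} & \cdots & a_{r,n}\end{pmatrix},$$ and let $I_A\subset K[x_1,\ldots,x_{n+r}]$ be the corresponding toric ideal (of height $r$). Then $I_A$ is radical splittable.
   Context: For a configuration $A=\{{\bf a}_1,\ldots,{\bf a}_N\}\subset\mathbb{Z}^n$ with $\ker_{\mathbb{Z}}(A)\cap\mathbb{N}^N=\{{\bf 0}\}$, the toric ideal $I_A$ is the kernel of $K[x_1,\ldots,x_N]\to K[t_1^{\pm1},\ldots,t_n^{\pm1}]$, $x_i\mapsto{\bf t}^{{\bf a}_i}$. (In the paper's terminology, $V(I_A)$ is a simplicial toric variety with full parametrization: all $a_{i,j}$ are nonnegative and nonzero.) $I_A$ is radical splittable if there exist toric ideals $I_{A_1},I_{A_2}\subset K[x_1,\ldots,x_{n+r}]$ with $I_A=\mathrm{rad}(I_{A_1}+I_{A_2})$ and $I_{A_i}\ne I_A$ for $i=1,2$. *)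

(* Defs.v *)
From HB Require Import structures.
From mathcomp Require Import all_boot all_algebra.
From mathcomp Require Import mpoly.

Set Implicit Arguments.
Unset Strict Implicit.
Unset Printing Implicit Defensive.

Import GRing.Theory.
Local Open Scope ring_scope.

(* A configuration A = {a_1,...,a_N} in Z^n is an n x N integer matrix whose
   columns are the a_i. *)

Definition mcol (N : nat) (m : 'X_{1..N}) : 'cV[int]_N := \col_i ((m i)%:Z).

(* the exponent of t in the image of x^m under x_i |-> t^{a_i} : t^{A m} *)
Definition tdeg (n N : nat) (A : 'M[int]_(n, N)) (m : 'X_{1..N}) : 'cV[int]_n :=
  A *m mcol m.

Definition config_ok (n N : nat) (A : 'M[int]_(n, N)) : Prop :=
  forall m : 'X_{1..N}, tdeg A m = 0 -> m = 0%MM.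

(* coefficient of the Laurent monomial t^b in the image of p under
   K[x_1..x_N] -> K[t^{±1}], x_i |-> t^{a_i} *)
Definition toric_img_coef (K : fieldType) (n N : nat) (A : 'M[int]_(n, N))
  (p : {mpoly K[N]}) (b : 'cV[int]_n) : K :=
  \sum_(m <- msupp p | tdeg A m == b) p@_m.

Definition in_toric (K : fieldType) (n N : nat) (A : 'M[int]_(n, N))
  (p : {mpoly K[N]}) : Prop :=
  forall b : 'cV[int]_n, toric_img_coef A p b = 0.

(* I_A is radical splittable: there are toric ideals I_{A1}, I_{A2} of
   K[x_1..x_N] with I_A = rad(I_{A1} + I_{A2}) and I_{Ai} <> I_A. *)
Definition radical_splittable (K : fieldType) (n N : nat) (A : 'M[int]_(n, N)) : Prop :=
  exists (n1 n2 : nat) (A1 : 'M[int]_(n1, N)) (A2 : 'M[int]_(n2, N)),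
    [/\ config_ok A1, config_ok A2,
        (forall p : {mpoly K[N]},
            in_toric A p <->
            exists (k : nat) (g h : {mpoly K[N]}),
              [/\ in_toric A1 g, in_toric A2 h & p ^+ k = g + h]),
        (exists p : {mpoly K[N]}, ~ (in_toric A1 p <-> in_toric A p))
      & (exists p : {mpoly K[N]}, ~ (in_toric A2 p <-> in_toric A p))].

Definition simplicial_config (n r : nat) (d : 'I_n -> nat) (a : 'I_r -> 'I_n -> nat)
  : 'M[int]_(n, n + r) :=
  row_mx (\matrix_(i < n, j < n) (if i == j then (d i)%:Z else 0))
         (\matrix_(j < n, k < r) (a k j)%:Z).

(* Main.v *)
Require Import Defs.
From mathcomp Require Import all_boot all_algebra.
From mathcomp Require Import mpoly.

Set Implicit Arguments.
Unset Strict Implicit.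
Unset Printing Implicit Defensive.
Import GRing.Theory Num.Theory.
Local Open Scope ring_scope.

Section Generic.
Variables (K : fieldType) (N n' : nat) (A : 'M[int]_(n', N)).
Hypothesis A_ge0 : forall i j, 0 <= A i j.
Implicit Types (p q : {mpoly K[N]}) (u v m : 'X_{1..N}).

Definition emon (m : 'X_{1..N}) : 'X_{1..n'} :=
  [multinom `|tdeg A m i ord0|%N | i < n'].
Definition colmon (j : 'I_N) : 'X_{1..n'} := [multinom `|A i j|%N | i < n'].
Definition phi (p : {mpoly K[N]}) : {mpoly K[n']} :=
  p \mPo [tuple 'X_[colmon j] | j < N].

Lemma tdegE m i : tdeg A m i ord0 = \sum_(j < N) A i j * (m j)%:Z.
Proof. by rewrite /tdeg mxE; apply: eq_bigr => j _; rewrite mxE. Qed.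

Lemma tdeg_ge0 m i : 0 <= tdeg A m i ord0.
Proof. by rewrite tdegE sumr_ge0 // => j _; rewrite mulr_ge0. Qed.

Lemma tdeg_emon m : tdeg A m = \col_i ((emon m i)%:Z).
Proof.
apply/matrixP => i j; rewrite (ord1 j) [RHS]mxE mnmE gez0_abs //.
exact: tdeg_ge0.
Qed.

Lemma emon_sum m : emon m = (\sum_(j < N) colmon j *+ m j)%MM.
Proof.
apply/mnmP => i; rewrite mnm_sumE mnmE.
apply/eqP; rewrite -eqz_nat gez0_abs ?tdeg_ge0 // tdegE.
rewrite (big_morph Posz PoszD (erefl _)). apply/eqP; apply: (@eq_big_seq _ _ _ _ _ _ _) => j _ /=.
by rewrite mulmnE mnmE PoszM gez0_abs.
Qed.

Lemma phiX m : 'X_[m] \mPo [tuple 'X_[colmon j] | j < N] = 'X_[emon m] :> {mpoly K[n']}.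
Proof.
rewrite comp_mpolyX emon_sum.
rewrite (big_morph (fun e : 'X_{1..n'} => 'X_[e] : {mpoly K[n']}) (@mpolyXD _ _) (@mpolyX0 _ _)).
by apply: eq_bigr => j _; rewrite tnth_mktuple mpolyXn.
Qed.

Lemma phiE p : phi p = \sum_(m <- msupp p) p@_m *: 'X_[emon m].
Proof. by rewrite /phi comp_mpolyEX; apply: eq_bigr => m _; rewrite phiX. Qed.

Lemma phi_coef p e : (phi p)@_e = \sum_(m <- msupp p | emon m == e) p@_m.
Proof.
rewrite phiE raddf_sum /= [RHS]big_mkcond; apply: eq_bigr => m _.
by rewrite mcoeffZ mcoeffX; case: eqP => _; rewrite ?mulr1 ?mulr0.
Qed.

Lemma emon_eq m e : (emon m == e) = (tdeg A m == \col_i (e i)%:Z).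
Proof.
rewrite tdeg_emon; apply/eqP/eqP => [-> //| /matrixP H].
by apply/mnmP => i; have := H i ord0; rewrite !mxE; case.
Qed.

Lemma in_toric_phi p : in_toric A p <-> phi p = 0.
Proof.
split.
- move=> H; apply/mpolyP => e; rewrite mcoeff0 phi_coef.
  rewrite -[RHS](H (\col_i (e i)%:Z)) /toric_img_coef.
  by apply: eq_bigl => m; rewrite emon_eq.
- move=> H b; rewrite /toric_img_coef.
  case: (boolP (b == \col_i (`|b i ord0|%N)%:Z)) => [/eqP Hb | Hb].
  + have := congr1 (mcoeff [multinom `|b i ord0|%N | i < n']) H.
    rewrite mcoeff0 phi_coef => E; rewrite -[RHS]E; apply: eq_bigl => m.
    have Hb' : \col_i (([multinom `|b i ord0|%N | i < n'] i)%:Z) = b.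
      by rewrite [RHS]Hb; apply/matrixP => i j; rewrite !mxE mnmE.
    by rewrite emon_eq Hb'.
  + rewrite big1 // => m /eqP Hm; exfalso; move/negP: Hb; apply.
    rewrite -Hm tdeg_emon; apply/eqP/matrixP => i j; rewrite !mxE.
    by rewrite absz_nat.
Qed.

Lemma phiD p q : phi (p + q) = phi p + phi q.
Proof. by rewrite /phi raddfD. Qed.
Lemma phiB p q : phi (p - q) = phi p - phi q.
Proof. by rewrite /phi raddfB. Qed.
Lemma phiM p q : phi (p * q) = phi p * phi q.
Proof. by rewrite /phi rmorphM. Qed.
Lemma phiXn p k : phi (p ^+ k) = phi p ^+ k.
Proof. by rewrite /phi rmorphXn. Qed.
Lemma phi0 : phi 0 = 0.
Proof. by rewrite /phi raddf0. Qed.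
Lemma phiX' m : phi 'X_[m] = 'X_[emon m].
Proof. exact: phiX. Qed.

Lemma in_toric0 : in_toric A (0 : {mpoly K[N]}).
Proof. by apply/in_toric_phi; rewrite phi0. Qed.

Lemma in_toricD p q : in_toric A p -> in_toric A q -> in_toric A (p + q).
Proof.
by move=> /in_toric_phi Hp /in_toric_phi Hq; apply/in_toric_phi;
  rewrite phiD Hp Hq addr0.
Qed.

Lemma in_toricM p q : in_toric A p -> in_toric A (q * p).
Proof.
by move=> /in_toric_phi Hp; apply/in_toric_phi;
  rewrite phiM Hp mulr0.
Qed.

Lemma in_toricX u v : tdeg A u = tdeg A v -> in_toric A ('X_[u] - 'X_[v] : {mpoly K[N]}).
Proof.
move=> H; apply/in_toric_phi; rewrite phiB !phiX'.
by rewrite /emon H subrr.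
Qed.

Lemma in_toric_notX u v : tdeg A u != tdeg A v -> ~ in_toric A ('X_[u] - 'X_[v] : {mpoly K[N]}).
Proof.
move=> H /in_toric_phi; rewrite phiB !phiX' => /(congr1 (mcoeff (emon u))).
rewrite mcoeff0 mcoeffB !mcoeffX eqxx.
have -> : (emon v == emon u) = false.
  apply/negP => /eqP E; move/negP: H; apply; rewrite !tdeg_emon E //.
by rewrite subr0 => /eqP; rewrite oner_eq0.
Qed.

Lemma in_toric_pow p k : in_toric A (p ^+ k) -> in_toric A p.
Proof.
move=> /in_toric_phi; rewrite phiXn => /eqP.
by rewrite expf_eq0 => /andP [_ /eqP H]; apply/in_toric_phi.
Qed.

End Generic.

Lemma splitl m n (i : 'I_m) : split (lshift n i) = inl i.
Proof. exact: (unsplitK (inl _ i)). Qed.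
Lemma splitr m n (k : 'I_n) : split (rshift m k) = inr k.
Proof. exact: (unsplitK (inr _ k)). Qed.
Lemma ordsplit m n (i : 'I_(m + n)) :
  (exists k, i = lshift n k) \/ (exists k, i = rshift m k).
Proof. by case: (splitP i) => k Hk; [left|right]; exists k; apply: val_inj. Qed.

Section Stack.
Variables (K : fieldType) (N n1 n2 : nat) (A : 'M[int]_(n1, N)) (B : 'M[int]_(n2, N)).
Hypothesis A_ge0 : forall i j, 0 <= A i j.
Hypothesis B_ge0 : forall i j, 0 <= B i j.

Lemma col_ge0 : forall i j, 0 <= col_mx A B i j.
Proof.
move=> i j; case: (ordsplit i) => [[k ->]|[k ->]];
  by rewrite ?col_mxEu ?col_mxEd.
Qed.

Lemma tdeg_col m : tdeg (col_mx A B) m = col_mx (tdeg A m) (tdeg B m).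
Proof. by rewrite /tdeg mul_col_mx. Qed.

Lemma in_toric_col (p : {mpoly K[N]}) : in_toric (col_mx A B) p -> in_toric A p.
Proof.
move=> /(in_toric_phi col_ge0) H; apply/(in_toric_phi A_ge0).
pose psi := comp_mpoly [tuple (match split i with inl i' => 'X_i' | inr _ => 1 end
   : {mpoly K[n1]}) | i < n1 + n2].
have Hpsi m : psi 'X_[emon (col_mx A B) m] = 'X_[emon A m].
  rewrite /psi comp_mpolyX big_split_ord /= [X in _ * X]big1 ?mulr1; last first.
    by move=> k _; rewrite tnth_mktuple splitr expr1n.
  rewrite mpolyXE_id; apply: eq_bigr => i _; rewrite tnth_mktuple splitl.
  by rewrite /emon !mnmE tdeg_col col_mxEu.
have -> : phi A p = psi (phi (col_mx A B) p).
  rewrite (phiE A_ge0) (phiE col_ge0) /psi.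
  rewrite (big_morph _ (comp_mpolyD _) (comp_mpoly0 _)); apply: eq_bigr => m _.
  by rewrite comp_mpolyZ -/psi Hpsi.
by rewrite H /psi raddf0.
Qed.

Lemma config_ok_col : config_ok A -> config_ok (col_mx A B).
Proof.
move=> H m Hm; apply: H.
have := congr1 usubmx Hm; rewrite tdeg_col col_mxKu => ->.
by rewrite -col_mx0 col_mxKu.
Qed.

End Stack.

Lemma sum_delta (N : nat) (p : 'I_N) (f : 'I_N -> int) :
  \sum_(l < N) (l == p)%:R * f l = f p.
Proof.
rewrite (bigD1 p) //= eqxx mul1r big1 ?addr0 // => l /negbTE ->.
by rewrite mul0r.
Qed.

From Stdlib Require Import Classical.
From mathcomp Require Import zify ring.

Section Main.
Variables (K : fieldType) (n r : nat) (d : 'I_n -> nat) (a : 'I_r -> 'I_n -> nat).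
Hypotheses (n_gt0 : (0 < n)%N) (r_ge3 : (3 <= r)%N) (d_gt0 : forall j, (0 < d j)%N)
  (a_gt0 : forall i j, (0 < a i j)%N).

Local Notation N := (n + r).
Local Notation A := (simplicial_config d a).
Definition xi (i : 'I_n) : 'I_N := lshift r i.
Definition yk (k : 'I_r) : 'I_N := rshift n k.
Definition k0 : 'I_r := Ordinal (leq_trans (isT : (0 < 3)%N) r_ge3).
Definition k1 : 'I_r := Ordinal (leq_trans (isT : (1 < 3)%N) r_ge3).
Definition k2 : 'I_r := Ordinal (leq_trans (isT : (2 < 3)%N) r_ge3).
Definition i0 : 'I_n := Ordinal n_gt0.

Lemma xy_neq i k : (yk k == xi i) = false.
Proof.
apply/negP => /eqP /(congr1 val) /=; move: (ltn_ord i) => Hi H.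
by move: Hi; rewrite -H ltnNge leq_addr.
Qed.
Lemma yx_neq i k : (xi i == yk k) = false.
Proof. by rewrite eq_sym xy_neq. Qed.
Lemma yk_eq k l : (yk k == yk l) = (k == l).
Proof. by apply/eqP/eqP => [/rshift_inj|->]. Qed.
Lemma xi_eq i j : (xi i == xi j) = (i == j).
Proof. by apply/eqP/eqP => [/lshift_inj|->]. Qed.
Lemma ordNr (j : 'I_N) : (exists i, j = xi i) \/ (exists k, j = yk k).
Proof. exact: ordsplit. Qed.

Lemma A_xi i j : A i (xi j) = if i == j then (d i)%:Z else 0.
Proof. by rewrite /simplicial_config /xi row_mxEl mxE. Qed.
Lemma A_yk i k : A i (yk k) = (a k i)%:Z.
Proof. by rewrite /simplicial_config /yk row_mxEr mxE. Qed.
Lemma A_ge0 : forall i j, 0 <= A i j.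
Proof.
move=> i j; case: (ordNr j) => [[l ->]|[k ->]]; rewrite ?A_xi ?A_yk //.
by case: ifP.
Qed.

Lemma Amul (z : 'cV[int]_N) i :
  (A *m z) i ord0 = (d i)%:Z * z (xi i) ord0 + \sum_k (a k i)%:Z * z (yk k) ord0.
Proof.
rewrite mxE big_split_ord /=; congr (_ + _); last first.
  by apply: eq_bigr => k _; rewrite -/(yk k) A_yk.
rewrite (bigD1 i) //= big1 ?addr0; first by rewrite -/(xi i) A_xi eqxx.
by move=> j Hj; rewrite -/(xi j) A_xi eq_sym (negbTE Hj) mul0r.
Qed.

Lemma tdegAN m i : tdeg A m i ord0 =
  (d i * m (xi i) + \sum_k a k i * m (yk k))%N%:Z.
Proof.
rewrite /tdeg Amul /mcol !mxE PoszD PoszM (big_morph Posz PoszD (erefl _)).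
by congr (_ + _); apply: eq_bigr => k _; rewrite mxE PoszM.
Qed.

Lemma config_okA : config_ok A.
Proof.
move=> m Hm; apply/mnmP => j; rewrite mnm0E.
have H i : (d i * m (xi i) + \sum_k a k i * m (yk k) = 0)%N.
  by have := congr1 (fun z : 'cV[int]_n => z i ord0) Hm; rewrite /= tdegAN mxE; case.
case: (ordNr j) => [[i ->]|[k ->]].
  move/eqP: (H i); rewrite addn_eq0 muln_eq0 => /andP [/orP [|/eqP //]].
  by move=> /eqP H0; move: (d_gt0 i); rewrite H0.
move/eqP: (H i0); rewrite addn_eq0 sum_nat_eq0 => /andP [_ /forallP /(_ k)].
rewrite /= muln_eq0 => /orP [/eqP H0|/eqP //]; by move: (a_gt0 k i0); rewrite H0.
Qed.

Definition M : nat := \prod_(i < n) d i.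
Lemma M_gt0 : (0 < M)%N.
Proof. by rewrite /M prodn_gt0. Qed.
Lemma dvd_M i : (d i %| M)%N.
Proof. by rewrite /M (bigD1 i) //= dvdn_mulr. Qed.

Definition cc k i : nat := (M %/ d i * a k i)%N.
Lemma cc_eq k i : (d i * cc k i = a k i * M)%N.
Proof. by rewrite /cc mulnA [(d i * _)%N]mulnC divnK ?dvd_M // mulnC. Qed.
Lemma cc_gt0 k i : (0 < cc k i)%N.
Proof.
rewrite /cc muln_gt0 a_gt0 andbT divn_gt0 ?d_gt0 //.
by apply: dvdn_leq; [exact: M_gt0 | exact: dvd_M].
Qed.

Definition cvec (k : 'I_r) : 'X_{1..N} :=
  [multinom (match split j with inl i => cc k i | inr _ => 0%N end) | j < N].
Definition ymon (k : 'I_r) : 'X_{1..N} := (U_(yk k) *+ M)%MM.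

Lemma cvec_x k i : cvec k (xi i) = cc k i.
Proof. by rewrite mnmE /xi splitl. Qed.
Lemma cvec_y k l : cvec k (yk l) = 0%N.
Proof. by rewrite mnmE /yk splitr. Qed.
Lemma ymon_x k i : ymon k (xi i) = 0%N.
Proof. by rewrite mulmnE mnm1E xy_neq. Qed.
Lemma ymon_y k l : ymon k (yk l) = if k == l then M else 0%N.
Proof. by rewrite mulmnE mnm1E yk_eq; case: eqP; rewrite ?mul1n. Qed.

Definition vk (k : 'I_r) : 'cV[int]_N := mcol (ymon k) - mcol (cvec k).
Lemma vk_x k i : vk k (xi i) ord0 = - (cc k i)%:Z.
Proof. by rewrite !mxE ymon_x cvec_x sub0r. Qed.
Lemma vk_y k l : vk k (yk l) ord0 = if k == l then M%:Z else 0.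
Proof. by rewrite !mxE ymon_y cvec_y subr0; case: ifP. Qed.

Lemma A_vk k : A *m vk k = 0.
Proof.
apply/matrixP => i j; rewrite (ord1 j) [RHS]mxE Amul vk_x.
rewrite (bigD1 k) //= vk_y eqxx big1 ?addr0; last first.
  by move=> l Hl; rewrite vk_y eq_sym (negbTE Hl) mulr0.
by rewrite mulrN -!PoszM cc_eq addNr.
Qed.

Lemma tdeg_vk k : tdeg A (ymon k) = tdeg A (cvec k).
Proof. by apply/eqP; rewrite -subr_eq0 /tdeg -mulmxBr A_vk. Qed.


Lemma exists_u0_aux : forall g g' : nat, (g' <= g)%N ->
  forall z : 'cV[int]_N, A *m z = 0 -> z (yk k0) ord0 = g'%:Z -> (0 < g')%N ->
  exists u0 : 'cV[int]_N, [/\ A *m u0 = 0, 0 < u0 (yk k0) ord0 &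
    forall w : 'cV[int]_N, A *m w = 0 -> exists t, w (yk k0) ord0 = t * u0 (yk k0) ord0].
Proof.
elim=> [|g IH] g' Hg' z Hz Hzg Hg'0; first by case: g' Hg' Hg'0 {Hzg}.
case: (classic (forall w : 'cV[int]_N, A *m w = 0 ->
                  exists t, w (yk k0) ord0 = t * g'%:Z)) => [Hall|Hn].
  exists z; split => //; first by rewrite Hzg ltz_nat.
  by move=> w Hw; rewrite Hzg; exact: Hall.
have [w Hw] := not_all_ex_not _ _ Hn.
have [HwA Hwt] := imply_to_and _ _ Hw.
have g0_gt0 : 0 < g'%:Z by rewrite ltz_nat.
have g0_neq : g'%:Z != 0 by rewrite lt0r in g0_gt0; case/andP: g0_gt0.
pose q := ((w (yk k0) ord0) %/ g'%:Z)%Z.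
pose rr := ((w (yk k0) ord0) %% g'%:Z)%Z.
have Ew : w (yk k0) ord0 = q * g'%:Z + rr by exact: divz_eq.
pose z' := w - q *: z.
have Hz' : A *m z' = 0 by rewrite mulmxBr -scalemxAr Hz scaler0 HwA subr0.
have Hz'y : z' (yk k0) ord0 = rr by rewrite !mxE Hzg Ew; ring.
have rr_ge0 : 0 <= rr := modz_ge0 _ g0_neq.
have rr_lt : rr < g'%:Z := ltz_pmod _ g0_gt0.
have rr_neq0 : rr != 0.
  by apply/eqP => E; apply: Hwt; exists q; rewrite Ew E addr0.
apply: (IH `|rr|%N _ z') => //.
- lia.
- by rewrite gez0_abs.
- lia.
Qed.

Lemma exists_u1 : exists u1 : 'cV[int]_N,
  [/\ A *m u1 = 0, 0 < u1 (yk k0) ord0, u1 (yk k1) ord0 != 0 &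
    forall w : 'cV[int]_N, A *m w = 0 -> exists t, w (yk k0) ord0 = t * u1 (yk k0) ord0].
Proof.
have Hv : vk k0 (yk k0) ord0 = M%:Z by rewrite vk_y eqxx.
have [u0 [H1 H2 H3]] := exists_u0_aux (leqnn M) (A_vk k0) Hv M_gt0.
case: (boolP (u0 (yk k1) ord0 == 0)) => Hu; last by exists u0.
have Hy0 : (u0 + vk k1) (yk k0) ord0 = u0 (yk k0) ord0.
  by rewrite mxE vk_y addr0.
exists (u0 + vk k1); split.
- by rewrite mulmxDr H1 A_vk addr0.
- by rewrite Hy0.
- rewrite mxE vk_y eqxx (eqP Hu) add0r; move: M_gt0; lia.
- by move=> w Hw; rewrite Hy0; exact: H3.
Qed.



Lemma boolR (b : bool) : b%:R = (if b then 1 else 0 : int).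
Proof. by case: b. Qed.

Lemma mx0E p q (i : 'I_p) (j : 'I_q) : (0 : 'M[int]_(p, q)) i j = 0.
Proof. by rewrite mxE. Qed.

Lemma k01 : (k0 == k1) = false. Proof. by []. Qed.
Lemma k02 : (k0 == k2) = false. Proof. by []. Qed.
Lemma k12 : (k1 == k2) = false. Proof. by []. Qed.

Lemma tdeg_eq_ker p (A' : 'M[int]_(p, N)) u v :
  (tdeg A' u == tdeg A' v) = (A' *m (mcol u - mcol v) == 0).
Proof. by rewrite mulmxBr subr_eq0. Qed.

Section WithU.
Variable u1 : 'cV[int]_N.
Hypotheses (Hu1A : A *m u1 = 0) (Hu1y0 : 0 < u1 (yk k0) ord0)
  (Hu1y1 : u1 (yk k1) ord0 != 0)
  (Hu1div : forall w : 'cV[int]_N, A *m w = 0 ->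
     exists t, w (yk k0) ord0 = t * u1 (yk k0) ord0).

Definition bb (j : 'I_r) : int := u1 (yk j) ord0.
Definition CC : nat := (\sum_j `|bb j|)%N.
Definition B1 : 'M[int]_(r, N) := \matrix_(j, l)
  (((j != k0) && (j != k1))%:R * (bb k1 * (l == yk j)%:R - bb j * (l == yk k1)%:R)
   + CC%:Z * A i0 l).
Definition E2 : 'M[int]_(1, N) := \matrix_(i, l) (l == yk k0)%:R.
Definition A1 := col_mx A B1.
Definition A2 := col_mx A E2.

Lemma bb_le j : (`|bb j| <= CC)%N.
Proof. by rewrite /CC (bigD1 j) //= leq_addr. Qed.

Lemma bb_bound j : (- CC%:Z <= bb j) && (bb j <= CC%:Z).
Proof. by have := bb_le j; rewrite -lez_nat abszE ler_norml. Qed.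

Lemma B1_ge0 i l : 0 <= B1 i l.
Proof.
rewrite mxE; case: (ordNr l) => [[i' ->]|[k ->]].
  by rewrite !yx_neq !boolR !mulr0 ?subr0 ?mulr0 add0r mulr_ge0 ?A_ge0.
rewrite !yk_eq A_yk !boolR.
have /andP [H1 H1'] := bb_bound i; have /andP [H2 H2'] := bb_bound k1.
have H3 := a_gt0 k i0; have H4 : 0 <= CC%:Z by [].
have H3' : 1 <= (a k i0)%:Z by rewrite lez_nat.
case: (i != k0); case: (boolP (i != k1)) => Hi1;
  case: (boolP (k == i)) => [/eqP Eki|_]; case: (boolP (k == k1)) => [/eqP Ek1|_] /=;
  try nia.
by move: Hi1; rewrite -Eki Ek1 eqxx.
Qed.

Lemma E2_ge0 i l : 0 <= E2 i l.
Proof. by rewrite mxE; case: (_ == _). Qed.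

Lemma A1_ge0 : forall i l, 0 <= A1 i l.
Proof. exact: col_ge0 A_ge0 B1_ge0. Qed.
Lemma A2_ge0 : forall i l, 0 <= A2 i l.
Proof. exact: col_ge0 A_ge0 E2_ge0. Qed.

Lemma B1mul (z : 'cV[int]_N) j : (B1 *m z) j ord0 =
  ((j != k0) && (j != k1))%:R * (bb k1 * z (yk j) ord0 - bb j * z (yk k1) ord0)
  + CC%:Z * (A *m z) i0 ord0.
Proof.
set c := ((j != k0) && (j != k1))%:R.
rewrite mxE [X in _ = _ + _ * X]mxE mulr_sumr.
rewrite (eq_bigr (fun l => c * bb k1 * ((l == yk j)%:R * z l ord0)
   - c * bb j * ((l == yk k1)%:R * z l ord0) + CC%:Z * (A i0 l * z l ord0))); last first.
  by move=> l _; rewrite mxE; ring.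
rewrite big_split /= sumrB -!mulr_sumr !sum_delta; ring.
Qed.

Lemma E2mul (z : 'cV[int]_N) : (E2 *m z) ord0 ord0 = z (yk k0) ord0.
Proof.
by rewrite mxE (eq_bigr (fun l => (l == yk k0)%:R * z l ord0)) ?sum_delta // => l _; rewrite mxE.
Qed.

Lemma A1_ker (z : 'cV[int]_N) : A *m z = 0 -> B1 *m z = 0 -> A1 *m z = 0.
Proof. by rewrite /A1 mul_col_mx => -> ->; rewrite col_mx0. Qed.

Lemma A2_ker (z : 'cV[int]_N) : A *m z = 0 -> z (yk k0) ord0 = 0 -> A2 *m z = 0.
Proof.
move=> H1 H2; rewrite /A2 mul_col_mx H1.
have -> : E2 *m z = 0.
  by apply/matrixP => i j; rewrite (ord1 i) (ord1 j) E2mul H2 mxE.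
by rewrite col_mx0.
Qed.

Lemma A1_u1 : A1 *m u1 = 0.
Proof.
apply: A1_ker => //; apply/matrixP => i j; rewrite (ord1 j) B1mul Hu1A !mxE /bb.
ring.
Qed.

Lemma A1_v0 : A1 *m vk k0 = 0.
Proof.
apply: A1_ker; first exact: A_vk.
apply/matrixP => i j; rewrite (ord1 j) B1mul A_vk !mx0E mulr0 addr0.
case: (boolP ((i != k0) && (i != k1))) => [/andP [Hi0 _]|_]; last by rewrite mul0r.
by rewrite !vk_y eq_sym (negbTE Hi0) k01 !mulr0 ?subr0 ?mulr0.
Qed.

Lemma A1_notv2 : tdeg A1 (ymon k2) != tdeg A1 (cvec k2).
Proof.
rewrite tdeg_eq_ker -/(vk k2); apply/negP => /eqP H.
have := congr1 (fun z : 'cV[int]_(n + r) => z (rshift n k2) ord0) H.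
rewrite /A1 mul_col_mx col_mxEd B1mul A_vk !mx0E mulr0 addr0 /=.
rewrite !vk_y eqxx eq_sym k12 mulr0 subr0 mul1r => /eqP.
rewrite mulf_eq0 (negbTE Hu1y1) /= => /eqP.
by move: M_gt0; lia.
Qed.

Lemma A2_vk k : k != k0 -> A2 *m vk k = 0.
Proof. by move=> Hk; apply: A2_ker; rewrite ?A_vk // vk_y (negbTE Hk). Qed.

Lemma A2_notv0 : tdeg A2 (ymon k0) != tdeg A2 (cvec k0).
Proof.
rewrite tdeg_eq_ker -/(vk k0); apply/negP => /eqP H.
have := congr1 (fun z : 'cV[int]_(n + 1) => z (rshift n ord0) ord0) H.
rewrite /A2 mul_col_mx col_mxEd E2mul vk_y eqxx mx0E.
by move: M_gt0; lia.
Qed.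



Implicit Types (p q : {mpoly K[N]}) (u v m : 'X_{1..N}) (z e : 'cV[int]_N) (c : int).

Definition Jp q := exists g h, [/\ in_toric A1 g, in_toric A2 h & q = g + h].

Lemma Jp0 : Jp 0.
Proof. by exists 0, 0; split; rewrite ?addr0 //; apply: in_toric0; [exact: A1_ge0|exact: A2_ge0]. Qed.

Lemma JpD p q : Jp p -> Jp q -> Jp (p + q).
Proof.
move=> [g1 [h1 [G1 H1 ->]]] [g2 [h2 [G2 H2 ->]]]; exists (g1 + g2), (h1 + h2).
split; [exact: (@in_toricD K _ _ A1 A1_ge0 _ _ G1 G2)|exact: (@in_toricD K _ _ A2 A2_ge0 _ _ H1 H2)|].
by rewrite addrACA.
Qed.

Lemma JpM p q : Jp p -> Jp (q * p).
Proof.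
move=> [g [h [G H ->]]]; exists (q * g), (q * h).
split; [exact: (@in_toricM K _ _ A1 A1_ge0 _ q G)|exact: (@in_toricM K _ _ A2 A2_ge0 _ q H)|].
by rewrite mulrDr.
Qed.

Lemma JpN p : Jp p -> Jp (- p).
Proof. by move=> H; rewrite -mulN1r; apply: JpM. Qed.

Lemma Jp1 g : in_toric A1 g -> Jp g.
Proof. by move=> G; exists g, 0; split; rewrite ?addr0 //; apply: in_toric0; exact: A2_ge0. Qed.
Lemma Jp2 h : in_toric A2 h -> Jp h.
Proof. by move=> H; exists 0, h; split; rewrite ?add0r //; apply: in_toric0; exact: A1_ge0. Qed.

Lemma Jp_ymon k : Jp ('X_[ymon k] - 'X_[cvec k]).
Proof.
case: (boolP (k == k0)) => [/eqP ->|Hk].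
  apply: Jp1; apply: in_toricX; first exact: A1_ge0.
  by apply/eqP; rewrite tdeg_eq_ker -/(vk k0) A1_v0.
apply: Jp2; apply: in_toricX; first exact: A2_ge0.
by apply/eqP; rewrite tdeg_eq_ker -/(vk k) A2_vk.
Qed.

Definition onex : 'X_{1..N} :=
  [multinom (match split j with inl _ => 1 | inr _ => 0 end)%N | j < N].
Lemma onex_x i : onex (xi i) = 1%N.
Proof. by rewrite mnmE /xi splitl. Qed.
Lemma onex_y k : onex (yk k) = 0%N.
Proof. by rewrite mnmE /yk splitr. Qed.

Definition PP : {mpoly K[N]} := 'X_[onex].

Lemma PP_split m : (forall i, 0 < m (xi i))%N -> 'X_[m] = PP * 'X_[(m - onex)%MM].
Proof.
move=> H; rewrite /PP -mpolyXD; congr 'X_[_]; apply/mnmP => j.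
rewrite mnmDE mnmBE; case: (ordNr j) => [[i ->]|[k ->]].
  by rewrite onex_x subnKC ?H.
by rewrite onex_y add0n subn0.
Qed.

Definition Rel u v := exists t, Jp (PP ^+ t * ('X_[u] - 'X_[v])).

Lemma Rel_refl u : Rel u u.
Proof. by exists 0%N; rewrite subrr mulr0; exact: Jp0. Qed.

Lemma Rel_sym u v : Rel u v -> Rel v u.
Proof.
move=> [t H]; exists t; rewrite -opprB mulrN; exact: JpN.
Qed.

Lemma Rel_trans u v w : Rel u v -> Rel v w -> Rel u w.
Proof.
move=> [t1 H1] [t2 H2]; exists (t1 + t2)%N.
have -> : PP ^+ (t1 + t2) * ('X_[u] - 'X_[w]) =
   PP ^+ t2 * (PP ^+ t1 * ('X_[u] - 'X_[v])) + PP ^+ t1 * (PP ^+ t2 * ('X_[v] - 'X_[w])).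
  by rewrite exprD; ring.
by apply: JpD; apply: JpM.
Qed.

Lemma Rel_cancel u v (s : 'X_{1..N}) : (forall k, s (yk k) = 0%N) ->
  Rel (u + s)%MM (v + s)%MM -> Rel u v.
Proof.
move=> Hs [t H]; pose T := (\sum_(j < N) s j)%N.
have HT : (onex *+ T = s + (onex *+ T - s))%MM.
  apply/mnmP => j; rewrite mnmDE mnmBE mulmnE.
  case: (ordNr j) => [[i ->]|[k ->]]; last by rewrite Hs onex_y.
  by rewrite onex_x mul1n subnKC // /T (bigD1 (xi i)) //= leq_addr.
exists (t + T)%N.
have -> : PP ^+ (t + T) * ('X_[u] - 'X_[v]) =
    'X_[(onex *+ T - s)%MM] * (PP ^+ t * ('X_[(u + s)%MM] - 'X_[(v + s)%MM])).
  have E : PP ^+ T = 'X_[s] * 'X_[(onex *+ T - s)%MM].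
    by rewrite /PP mpolyXn {1}HT mpolyXD.
  rewrite exprD E !mpolyXD; ring.
exact: JpM.
Qed.

Lemma Rel_A1 u v : tdeg A1 u = tdeg A1 v -> Rel u v.
Proof.
move=> H; exists 0%N; rewrite expr0 mul1r; apply: Jp1.
by apply: in_toricX => //; exact: A1_ge0.
Qed.

Lemma Rel_A2 u v : tdeg A2 u = tdeg A2 v -> Rel u v.
Proof.
move=> H; exists 0%N; rewrite expr0 mul1r; apply: Jp2.
by apply: in_toricX => //; exact: A2_ge0.
Qed.

Definition mz (z : 'cV[int]_N) : 'X_{1..N} := [multinom `|z j ord0|%N | j < N].

Lemma mcol_mz z : (forall j, 0 <= z j ord0) -> mcol (mz z) = z.
Proof.
move=> H; apply/matrixP => j k; rewrite (ord1 k) mxE mnmE gez0_abs //.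
Qed.

Lemma Rel_vec1 z e c : (forall j, 0 <= z j ord0) ->
  (forall j, 0 <= (z + c *: e) j ord0) -> A1 *m e = 0 ->
  Rel (mz z) (mz (z + c *: e)).
Proof.
move=> H1 H2 He; apply: Rel_A1; apply/eqP.
rewrite tdeg_eq_ker !mcol_mz // opprD addrA subrr add0r mulmxN -scalemxAr He.
by rewrite scaler0 oppr0.
Qed.

Lemma Rel_vec2 z e c : (forall j, 0 <= z j ord0) ->
  (forall j, 0 <= (z + c *: e) j ord0) -> A2 *m e = 0 ->
  Rel (mz z) (mz (z + c *: e)).
Proof.
move=> H1 H2 He; apply: Rel_A2; apply/eqP.
rewrite tdeg_eq_ker !mcol_mz // opprD addrA subrr add0r mulmxN -scalemxAr He.
by rewrite scaler0 oppr0.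
Qed.

Lemma sum_part (T U : eqType) (V : nmodType) (s : seq T) (f : T -> U) (G : T -> V) :
  \sum_(x <- s) G x = \sum_(u <- undup (map f s)) \sum_(x <- s | f x == u) G x.
Proof.
symmetry; rewrite (exchange_big_dep xpredT) //=; apply: eq_big_seq => x Hx.
rewrite -big_filter (eq_filter (a2 := pred1 (f x))); last by move=> u /=; rewrite eq_sym.
rewrite filter_pred1_uniq ?undup_uniq ?big_seq1 // mem_undup; exact: map_f.
Qed.

Lemma eD z z' j : (z + z') j ord0 = z j ord0 + z' j ord0.
Proof. by rewrite mxE. Qed.
Lemma eZ c z j : (c *: z) j ord0 = c * z j ord0.
Proof. by rewrite mxE. Qed.
Lemma eB z z' j : (z - z') j ord0 = z j ord0 - z' j ord0.
Proof. by rewrite !mxE. Qed.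
Lemma mcolE m j : mcol m j ord0 = (m j)%:Z.
Proof. by rewrite mxE. Qed.

Lemma Rel_A u v : tdeg A u = tdeg A v -> Rel u v.
Proof.
move=> Huv.
pose w : 'cV[int]_N := mcol u - mcol v.
have HwA : A *m w = 0.
  by rewrite /w mulmxBr; apply/eqP; rewrite subr_eq0; apply/eqP.
have [t Ht] := Hu1div HwA.
pose w1 : 'cV[int]_N := t *: u1.
have Hw1 : A1 *m w1 = 0 by rewrite /w1 -scalemxAr A1_u1 scaler0.
have Hw2 : A2 *m (w - w1) = 0.
  apply: A2_ker; first by rewrite mulmxBr /w1 -scalemxAr Hu1A scaler0 HwA subr0.
  by rewrite eB /w1 eZ Ht subrr.
pose B0 := (\sum_j `|w1 j ord0|)%N.
have Fw1 j : (- B0%:Z <= w1 j ord0) && (w1 j ord0 <= B0%:Z).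
  have : (`|w1 j ord0| <= B0)%N by rewrite /B0 (bigD1 j) //= leq_addr.
  by rewrite -lez_nat abszE ler_norml.
clearbody w1.
pose V0 : 'cV[int]_N := vk k0.
pose Vr : 'cV[int]_N := \sum_(k | k != k0) vk k.
have HV0 : A1 *m V0 = 0 by exact: A1_v0.
have HVr : A2 *m Vr = 0.
  by rewrite /Vr mulmx_sumr big1 // => k Hk; apply: A2_vk.
pose Cr i := (\sum_(k | k != k0) cc k i)%N.
have FV0x i : V0 (xi i) ord0 = - (cc k0 i)%:Z by rewrite /V0 vk_x.
have FVrx i : Vr (xi i) ord0 = - (Cr i)%:Z.
  rewrite /Vr summxE (eq_bigr (fun k => - (cc k i)%:Z)); last by move=> k _; rewrite vk_x.
  by rewrite sumrN /Cr (big_morph Posz PoszD (erefl _)).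
have FV0y l : 0 <= V0 (yk l) ord0 by rewrite /V0 vk_y; case: ifP.
have FVy l : Vr (yk l) ord0 = M%:Z - V0 (yk l) ord0.
  rewrite /Vr /V0 summxE vk_y.
  case: (boolP (k0 == l)) => [/eqP <-|Hl].
    by rewrite big1 ?subrr // => k Hk; rewrite vk_y (negbTE Hk).
  rewrite (bigD1 l) 1?eq_sym //= vk_y eqxx big1 ?addr0 ?subr0 //.
  by move=> k /andP [_ Hk]; rewrite vk_y (negbTE Hk).
have FVry l : 0 <= Vr (yk l) ord0.
  by rewrite FVy /V0 vk_y; case: ifP; rewrite ?subrr ?subr0.
clearbody V0 Vr.
pose S : 'cV[int]_N := \col_j (match split j with
   | inl i => (B0 * (cc k0 i + Cr i) + B0)%N%:Z | inr _ => 0 end).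
have FSx i : S (xi i) ord0 = (B0 * (cc k0 i + Cr i) + B0)%N%:Z.
  by rewrite mxE /xi splitl.
have FSy l : S (yk l) ord0 = 0 by rewrite mxE /yk splitr.
have FS j : 0 <= S j ord0.
  by case: (ordNr j) => [[i ->]|[l ->]]; rewrite ?FSx ?FSy.
clearbody S.
have M1 : 1 <= M%:Z by rewrite lez_nat M_gt0.
have HBM : B0%:Z <= B0%:Z * M%:Z by rewrite -PoszM lez_nat leq_pmulr // M_gt0.
have Hw : forall j, w j ord0 = (u j)%:Z - (v j)%:Z by move=> j; rewrite /w eB !mcolE.
clearbody w.
pose Yz := B0%:Z.
pose z0 := mcol u + S.
pose z1 := z0 + Yz *: V0.
pose z2 := z1 + Yz *: Vr.
pose z3 := z2 + (-1) *: w1.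
pose z4 := z3 + (-1) *: (w - w1).
pose z5 := z4 + (- Yz) *: Vr.
pose z6 := z5 + (- Yz) *: V0.
have E6 : z6 = mcol v + S.
  apply/matrixP => j k; rewrite (ord1 k) /z6 /z5 /z4 /z3 /z2 /z1 /z0.
  rewrite !eD !eZ !eB Hw !mcolE; ring.
have HY : 0 <= Yz by rewrite /Yz.
have HYB : Yz = B0%:Z by [].
clearbody Yz.
have N0 j : 0 <= z0 j ord0.
  by rewrite /z0 eD mcolE addr_ge0.
have N1 j : 0 <= z1 j ord0.
  rewrite /z1 /z0 HYB !eD eZ mcolE; case: (ordNr j) => [[i ->]|[l ->]].
    rewrite FSx FV0x; nia.
  have := FV0y l; rewrite FSy; nia.
have N2 j : 0 <= z2 j ord0.
  rewrite /z2 /z1 /z0 HYB !eD !eZ mcolE; case: (ordNr j) => [[i ->]|[l ->]].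
    rewrite FSx FV0x FVrx; nia.
  have := FV0y l; have := FVry l; rewrite FSy; nia.
have N3 j : 0 <= z3 j ord0.
  rewrite /z3 /z2 /z1 /z0 HYB !eD !eZ mulN1r mcolE; case: (ordNr j) => [[i Ej]|[l Ej]];
  have /andP [Ha Hb] := Fw1 j; rewrite Ej in Ha Hb *.
    rewrite FSx FV0x FVrx; nia.
  have := FV0y l; rewrite FSy FVy; nia.
have N4 j : 0 <= z4 j ord0.
  rewrite /z4 /z3 /z2 /z1 /z0 HYB !eD !eZ !mulN1r eB Hw mcolE; case: (ordNr j) => [[i Ej]|[l Ej]];
  have /andP [Ha Hb] := Fw1 j; rewrite Ej in Ha Hb *.
    rewrite FSx FV0x FVrx; nia.
  have := FV0y l; rewrite FSy FVy; nia.
have N5 j : 0 <= z5 j ord0.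
  rewrite /z5 /z4 /z3 /z2 /z1 /z0 HYB !eD !eZ !mulN1r mulNr eB Hw mcolE;
  case: (ordNr j) => [[i Ej]|[l Ej]];
  have /andP [Ha Hb] := Fw1 j; rewrite Ej in Ha Hb *.
    rewrite FSx FV0x FVrx; nia.
  have := FV0y l; rewrite FSy FVy; nia.
have N6 j : 0 <= z6 j ord0 by rewrite E6 eD mcolE addr_ge0.
have R06 : Rel (mz z0) (mz z6).
  apply: (Rel_trans (Rel_vec1 N0 N1 HV0)).
  apply: (Rel_trans (Rel_vec2 N1 N2 HVr)).
  apply: (Rel_trans (Rel_vec1 N2 N3 Hw1)).
  apply: (Rel_trans (Rel_vec2 N3 N4 Hw2)).
  apply: (Rel_trans (Rel_vec2 N4 N5 HVr)).
  exact: (Rel_vec1 N5 N6 HV0).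
have Emz (m : 'X_{1..N}) : mz (mcol m + S) = (m + mz S)%MM.
  apply/mnmP => j; rewrite mnmDE !mnmE eD mcolE.
  by apply/eqP; rewrite -eqz_nat PoszD !gez0_abs // addr_ge0.
move: R06; rewrite E6 /z0 !Emz; apply: Rel_cancel => k.
by rewrite mnmE FSy.
Qed.

Lemma Jp_big (T : eqType) (s : seq T) (F : T -> {mpoly K[N]}) :
  (forall x, x \in s -> exists t, Jp (PP ^+ t * F x)) ->
  exists t, Jp (PP ^+ t * \sum_(x <- s) F x).
Proof.
elim: s => [|x s IH] H; first by exists 0%N; rewrite big_nil mulr0; exact: Jp0.
have [t1 H1] := H x (mem_head x s).
have Hs : forall y, y \in s -> y \in x :: s by move=> y Hy; rewrite inE Hy orbT.
have [t2 H2] := IH (fun y Hy => H y (Hs y Hy)).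
exists (t1 + t2)%N; rewrite big_cons.
have -> : PP ^+ (t1 + t2) * (F x + \sum_(y <- s) F y) =
   PP ^+ t2 * (PP ^+ t1 * F x) + PP ^+ t1 * (PP ^+ t2 * \sum_(y <- s) F y).
  by rewrite exprD; ring.
by apply: JpD; apply: JpM.
Qed.

Lemma stepA p : in_toric A p -> exists t, Jp (PP ^+ t * p).
Proof.
move=> Hp.
pose s := msupp p.
pose rep m := head 0%MM [seq m' <- s | tdeg A m' == tdeg A m].
have rep_tdeg m : m \in s -> tdeg A (rep m) = tdeg A m.
  move=> Hm.
  have Hx : forall l, all (fun m' => tdeg A m' == tdeg A m) l -> (m \in l) ->
      tdeg A (head 0%MM l) = tdeg A m by case=> // x l /= /andP [/eqP -> _].
  by apply: Hx; [exact: filter_all | rewrite mem_filter eqxx Hm].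
have rep_eq m m' : tdeg A m = tdeg A m' -> rep m = rep m' by move=> E; rewrite /rep E.
have Hsum : \sum_(m <- s) p@_m *: 'X_[rep m] = 0.
  rewrite (sum_part s rep) big_seq big1 // => u Hu.
  move: Hu; rewrite mem_undup => /mapP [m0 Hm0 ->].
  rewrite (eq_bigr (fun m => p@_m *: 'X_[rep m0])); last by move=> m /eqP ->.
  rewrite -scaler_suml.
  have -> : \sum_(m <- s | rep m == rep m0) p@_m = toric_img_coef A p (tdeg A m0).
    rewrite /toric_img_coef big_seq_cond [RHS]big_seq_cond; apply: eq_bigl => m.
    case: (boolP (m \in s)) => //= Hm; apply/eqP/eqP => [E|E]; last exact: rep_eq.
    by rewrite -(rep_tdeg m Hm) E rep_tdeg.
  by rewrite Hp scale0r.
have Ep : p = \sum_(m <- s) p@_m *: ('X_[m] - 'X_[rep m]).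
  rewrite (eq_bigr (fun m => p@_m *: 'X_[m] - p@_m *: 'X_[rep m]));
    last by move=> m _; rewrite scalerBr.
  by rewrite sumrB Hsum subr0 -mpolyE.
rewrite Ep; apply: Jp_big => m Hm.
have [t Ht] := Rel_A (esym (rep_tdeg m Hm)).
exists t; rewrite -scalerAr -mul_mpolyC; exact: JpM.
Qed.

Definition JP q := exists j g, Jp j /\ q = j + PP * g.

Lemma JP0 : JP 0.
Proof. by exists 0, 0; split; [exact: Jp0|rewrite mulr0 addr0]. Qed.
Lemma JPD p q : JP p -> JP q -> JP (p + q).
Proof.
move=> [j1 [g1 [H1 ->]]] [j2 [g2 [H2 ->]]]; exists (j1 + j2), (g1 + g2).
by split; [exact: JpD|ring].
Qed.
Lemma JPM p q : JP p -> JP (q * p).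
Proof.
move=> [j [g [H ->]]]; exists (q * j), (q * g).
by split; [exact: JpM|ring].
Qed.
Lemma JPMn p k : JP p -> JP (p *+ k).
Proof. by move=> H; rewrite -mulr_natl; apply: JPM. Qed.

Lemma JP_sum (T : eqType) (s : seq T) (F : T -> {mpoly K[N]}) :
  (forall x, x \in s -> JP (F x)) -> JP (\sum_(x <- s) F x).
Proof.
elim: s => [|x s IH] H; first by rewrite big_nil; exact: JP0.
rewrite big_cons; apply: JPD; first exact: H (mem_head x s).
by apply: IH => y Hy; apply: H; rewrite inE Hy orbT.
Qed.

Lemma rad_sum (f g : {mpoly K[N]}) (e1 e2 : nat) : JP (f ^+ e1) -> JP (g ^+ e2) -> JP ((f + g) ^+ (e1 + e2)).
Proof.
move=> Hf Hg; rewrite exprDn; apply: JP_sum => i _; apply: JPMn.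
case: (leqP e2 i) => Hi.
  have -> : g ^+ i = g ^+ (i - e2) * g ^+ e2 by rewrite -exprD subnK.
  by rewrite mulrA; apply: JPM.
have -> : f ^+ (e1 + e2 - i) = f ^+ (e2 - i) * f ^+ e1.
  by rewrite -exprD; congr (_ ^+ _); lia.
by rewrite mulrAC; apply: JPM.
Qed.

Lemma rad_big (T : eqType) (s : seq T) (F : T -> {mpoly K[N]}) :
  (forall x, x \in s -> exists k, JP (F x ^+ k)) ->
  exists k, JP ((\sum_(x <- s) F x) ^+ k).
Proof.
elim: s => [|x s IH] H.
  by exists 1%N; rewrite big_nil expr1; exact: JP0.
have [k1 H1] := H x (mem_head x s).
have Hs : forall y, y \in s -> y \in x :: s by move=> y Hy; rewrite inE Hy orbT.
have [k2 H2] := IH (fun y Hy => H y (Hs y Hy)).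
by exists (k1 + k2)%N; rewrite big_cons; apply: rad_sum.
Qed.

Lemma good m p : in_toric A p -> m \in msupp p ->
  (exists k, (0 < m (yk k))%N) \/ (forall i, (0 < m (xi i))%N).
Proof.
move=> Hp Hm.
case: (boolP [exists k, (0 < m (yk k))%N]) => [/existsP [k Hk]|Hy].
  by left; exists k.
case: (boolP [forall i, (0 < m (xi i))%N]) => [/forallP Hx|Hx]; first by right.
exfalso.
move/existsP: Hx => [i0' Hi0]; rewrite -leqNgt leqn0 in Hi0.
have Hy0 k : m (yk k) = 0%N.
  by apply/eqP; rewrite -leqn0 leqNgt; apply/negP => Hk; move/negP: Hy; apply; apply/existsP; exists k.
have Hinj m' : tdeg A m' = tdeg A m -> m' = m.
  move=> E.
  have Ei i : (d i * m' (xi i) + \sum_k a k i * m' (yk k) =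
               d i * m (xi i) + \sum_k a k i * m (yk k))%N.
    by have := congr1 (fun z : 'cV[int]_n => z i ord0) E; rewrite /= !tdegAN; case.
  have Hs : forall i, (\sum_k a k i * m (yk k) = 0)%N.
    by move=> i; rewrite big1 // => k _; rewrite Hy0 muln0.
  have Hy' : forall k, m' (yk k) = 0%N.
    move=> k; have := Ei i0'; rewrite Hs addn0 (eqP Hi0) muln0.
    move/eqP; rewrite addn_eq0 sum_nat_eq0 => /andP [_ /forallP /(_ k)].
    rewrite /= muln_eq0 => /orP [/eqP H0|/eqP //]; by move: (a_gt0 k i0'); rewrite H0.
  apply/mnmP => j; case: (ordNr j) => [[i ->]|[k ->]]; last by rewrite Hy' Hy0.
  have := Ei i; rewrite Hs big1 ?addn0; last by move=> k _; rewrite Hy' muln0.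
  by move/eqP; rewrite eqn_mul2l (negbTE (lt0n_neq0 (d_gt0 i))) /= => /eqP.
have := Hp (tdeg A m); rewrite /toric_img_coef.
rewrite (eq_bigl (fun m' => m' == m)); last first.
  by move=> m'; apply/eqP/eqP => [/Hinj|->].
rewrite -big_filter filter_pred1_uniq ?msupp_uniq // big_seq1 => H0.
by move: Hm; rewrite mcoeff_msupp H0 eqxx.
Qed.

Lemma JP_mono m p : in_toric A p -> m \in msupp p -> exists k, JP ('X_[m] ^+ k).
Proof.
move=> Hp Hm; case: (good Hp Hm) => [[k Hk]|Hx].
  exists M; rewrite mpolyXn.
  have Hle : (ymon k <= m *+ M)%MM.
    apply/mnm_lepP => j; rewrite mulmnE mulmnE mnm1E.
    case: eqP => [<-|_]; last by [].
    by rewrite mul1n leq_pmull.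
  have -> : (m *+ M = ymon k + (m *+ M - ymon k))%MM.
    by apply/mnmP => j; rewrite mnmDE mnmBE subnKC //; move/mnm_lepP: Hle.
  rewrite mpolyXD.
  have Hc : forall i, (0 < cvec k (xi i))%N by move=> i; rewrite cvec_x cc_gt0.
  exists (('X_[ymon k] - 'X_[cvec k]) * 'X_[(m *+ M - ymon k)%MM]),
         ('X_[(cvec k - onex)%MM] * 'X_[(m *+ M - ymon k)%MM]).
  split; first by rewrite mulrC; apply: JpM; exact: Jp_ymon.
  by rewrite (PP_split Hc); ring.
exists 1%N; rewrite expr1 (PP_split Hx).
exists 0, 'X_[(m - onex)%MM]; split; [exact: Jp0|by rewrite add0r].
Qed.

Lemma stepB p : in_toric A p -> exists k, JP (p ^+ k).
Proof.
move=> Hp; rewrite (mpolyE p); apply: rad_big => m Hm.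
have [k Hk] := JP_mono Hp Hm.
by exists k; rewrite exprZn -mul_mpolyC; apply: JPM.
Qed.

Lemma radJ p : in_toric A p -> exists k, Jp (p ^+ k).
Proof.
move=> Hp; have [t Ht] := stepA Hp; have [k [j [g [Hj E]]]] := stepB Hp.
have Hpow : forall t', exists j' g', Jp j' /\ (p ^+ k) ^+ t' = j' + PP ^+ t' * g'.
  elim=> [|t' [j' [g' [Hj' E']]]]; first by exists 0, 1; split; [exact: Jp0|rewrite add0r !expr0 mulr1].
  exists (j' * (j + PP * g) + PP ^+ t' * g' * j), (g' * g); split.
    by apply: JpD; [rewrite mulrC; apply: JpM | apply: JpM].
  by rewrite exprS E' E exprS; ring.
have [j' [g' [Hj' E']]] := Hpow t.
exists (k * t).+1; rewrite exprS exprM E'.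
have -> : p * (j' + PP ^+ t * g') = p * j' + g' * (PP ^+ t * p) by ring.
by apply: JpD; apply: JpM.
Qed.
End WithU.

Lemma main_rs : radical_splittable K A.
Proof.
have [u1 [H1 H2 H3 H4]] := exists_u1.
have G1 := A1_ge0 H2 H3.
exists (n + r)%N, (n + 1)%N, (A1 u1), A2; split.
- rewrite /A1; exact: config_ok_col config_okA.
- rewrite /A2; exact: config_ok_col config_okA.
- move=> p; split.
    move=> Hp; have [k [g [h [Hg Hh E]]]] := radJ H1 H2 H3 H4 Hp.
    by exists k, g, h; split.
  move=> [k [g [h [Hg Hh E]]]].
  apply: (in_toric_pow (k := k) A_ge0); rewrite E.
  apply: (in_toricD A_ge0).
    exact: (in_toric_col A_ge0 (B1_ge0 H2 H3) Hg).
  exact: (in_toric_col A_ge0 E2_ge0 Hh).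
- exists ('X_[ymon k2] - 'X_[cvec k2]) => [[_ H]].
  apply: (@in_toric_notX K _ _ _ G1 _ _ (A1_notv2 H2 H3)); apply: H.
  exact: (@in_toricX K _ _ _ A_ge0 _ _ (tdeg_vk k2)).
- exists ('X_[ymon k0] - 'X_[cvec k0]) => [[_ H]].
  apply: (@in_toric_notX K _ _ _ A2_ge0 _ _ (A2_notv0 H2 H3)); apply: H.
  exact: (@in_toricX K _ _ _ A_ge0 _ _ (tdeg_vk k0)).
Qed.

End Main.

Theorem proposition2p8 (K : fieldType) (n r : nat) (d : 'I_n -> nat)
  (a : 'I_r -> 'I_n -> nat) :
  (0 < n)%N -> (3 <= r)%N ->
  (forall j, (0 < d j)%N) ->
  (forall i j, (0 < a i j)%N) ->
  radical_splittable K (simplicial_config d a).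
Proof.
move=> Hn Hr Hd Ha; exact: (main_rs K Hn Hr Hd Ha).
Qed.
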